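(* Consider the hybrid system $\mathcal H$ described in the context, and suppose Assumption 2 (stated in the context) holds. Let $\nu>0$. For each $i\in\{1,\dots,N\}$ select $\sigma_i^\star>0$ and $c_i^\star\ge 0$ with $\sigma_i^\star c_i^\star<1$, select $d_i>d_i^\star:=\frac{\sigma_i^\star}{1-\sigma_i^\star c_i^\star}$, and select $\varepsilon_i^\star>0$ such that $\sum_{i=1}^N(1+d_ic_i^\star)\varepsilon_i^\star\le\nu$. Define, for $q=(x,z,e,\eta)\in\mathcal Q$, $$U(q):=V(x,z)+\sum_{i=1}^N d_i\eta_i .$$ Then there exist $\underline{\alpha}_U,\overline{\alpha}_U\in\mathcal K_\infty$ such that for any choice of $\alpha_i\in\mathcal K_\infty$, $\sigma_i\in[0,\sigma_i^\star]$, $c_i\in[0,c_i^\star]$, $\varepsilon_i\in(0,\varepsilon_i^\star]$ and $b_i\in[0,1]$, $i\in\{1,\dots,N\}$, the following hold: (i) for all $q\in\mathcal Q$, $\underline{\alpha}_U(|(x-\psi(z),\eta)|)\le U(q)\le\overline{\alpha}_U(|(\psi^{-R}(x)-z,\eta)|)$; (ii) for all $q\in\mathcal C$ and all $w=(u,v)\in\mathcal W$, $$\langle\nabla U(q),F(q,w)\rangle\le-\alpha(V(x,z))-\sum_{i=1}^N\delta_i\alpha_i(\eta_i)+\nu+\theta(|v|),$$ where $\alpha,\theta$ are the functions from Assumption 2 and $\delta_i:=d_i-\sigma_i^\star(1+d_ic_i^\star)>0$; (iii) for all $q\in\mathcal D$ and all $\mathfrak g\in G(q)$, $U(\mathfrak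 g)\le U(q)$.
   Context: Notation: $\mathcal K_\infty$ is the class of continuous, strictly increasing, unbounded functions $\mathbb R_{\ge0}\to\mathbb R_{\ge0}$ vanishing at $0$; $|\cdot|$ is the Euclidean norm. For $S\subseteq\mathbb R^m$, $\mathcal L_S$ is the set of Lebesgue measurable, locally essentially bounded functions $\mathbb R_{\ge0}\to S$. Plant: $\dot x=f_p(x,u,v)$, $y=h(x)$, with $x\in\mathbb R^{n_x}$, input $u\in\mathcal L_{\mathcal U}$, disturbance $v\in\mathcal L_{\mathcal V}$, where $\mathcal U\subseteq\mathbb R^{n_u}$, $\mathcal V\subseteq\mathbb R^{n_v}$, $n_x,n_y\in\mathbb Z_{>0}$, $n_u,n_v\in\mathbb Z_{\ge0}$; $f_p$ is locally Lipschitz in $x$ and continuous in the other arguments, $h:\mathbb R^{n_x}\to\mathbb R^{n_y}$ is continuously differentiable. The output is split into $N\in\{1,\dots,n_y\}$ sensor nodes: $y=(y_1,\dots,y_N)=(h_1(x),\dots,h_N(x))$, $y_i\in\mathbb R^{n_{y_i}}$, $\sum_i n_{y_i}=n_y$. Observer data: $f_o:\mathbb R^{n_z}\times\mathbb R^{n_u}\times\mathbb R^{n_y}\times\mathbb R^{n_y}\to\mathbb R^{n_z}$ continuous ($n_z\ge n_x$), and $\psi:\mathbb R^{n_z}\to\mathbb R^{n_x}$ admitting a right inverse $\psi^{-R}$, i.e. $\psi(\psi^{-R}(x))=x$ for all $x$; the observer has access to $u$ at all times (Assumption 1). Assumption 2: there exist $\underline\alpha,\overline\alpha,\alpha,\gamma_1,\dots,\gamma_N,\theta\in\mathcal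 K_\infty$ and a continuously differentiable $V:\mathbb R^{n_x}\times\mathbb R^{n_z}\to\mathbb R_{\ge0}$ such that for all $x\in\mathbb R^{n_x}$, $z\in\mathbb R^{n_z}$, $u\in\mathcal U$, $v\in\mathcal V$, $e=(e_1,\dots,e_N)\in\mathbb R^{n_y}$ ($e_i\in\mathbb R^{n_{y_i}}$), $\hat y\in\mathbb R^{n_y}$: $\underline\alpha(|x-\psi(z)|)\le V(x,z)\le\overline\alpha(|\psi^{-R}(x)-z|)$ and $\langle\nabla V(x,z),(f_p(x,u,v),f_o(z,u,h(x)+e,\hat y))\rangle\le-\alpha(V(x,z))+\sum_{i=1}^N\gamma_i(|e_i|)+\theta(|v|)$. Hybrid system $\mathcal H$: for $i=1,\dots,N$ let $\alpha_i\in\mathcal K_\infty$, $c_i\ge0$, $b_i\in[0,1]$, $\sigma_i\ge0$, $\varepsilon_i>0$ be design functions/parameters, and $\gamma_i$ as in Assumption 2. State $q=(x,z,e,\eta)\in\mathcal Q:=\mathbb R^{n_x}\times\mathbb R^{n_z}\times\mathbb R^{n_y}\times\mathbb R^N_{\ge0}$, $e=(e_1,\dots,e_N)$, $\eta=(\eta_1,\dots,\eta_N)$; input $w=(u,v)\in\mathcal W:=\mathcal U\times\mathcal V$. Flow map $F(q,w):=\big(f_p(x,u,v),\,f_o(z,u,h(x)+e,h(\psi(z))),\,g_1(x,w),\dots,g_N(x,w),\,\ell_1(\eta_1,e_1),\dots,\ell_N(\eta_N,e_N)\big)$ with $g_i(x,u,v):=-\frac{\partial h_i(x)}{\partial x}f_p(x,u,v)$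 and $\ell_i(\eta_i,e_i):=-\alpha_i(\eta_i)+c_i\gamma_i(|e_i|)$. Flow set $\mathcal C:=\bigcap_{i}\mathcal C_i$, $\mathcal C_i:=\{q\in\mathcal Q:\gamma_i(|e_i|)\le\sigma_i\alpha_i(\eta_i)+\varepsilon_i\}$; jump set $\mathcal D:=\bigcup_i\mathcal D_i$, $\mathcal D_i:=\{q\in\mathcal Q:\gamma_i(|e_i|)\ge\sigma_i\alpha_i(\eta_i)+\varepsilon_i\}$. Jump map $G(q):=\bigcup_iG_i(q)$ where $G_i(q)=\emptyset$ if $q\notin\mathcal D_i$ and, if $q\in\mathcal D_i$, $G_i(q)$ is the single point $(x,z,e',\eta')$ with $e'_i=0$, $e'_j=e_j$, $\eta'_i=b_i\eta_i$, $\eta'_j=\eta_j$ for $j\ne i$. The system is $\dot q=F(q,w)$ for $q\in\mathcal C$, $q^+\in G(q)$ for $q\in\mathcal D$. *)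

(* Defs.v *)
From HB Require Import structures.
From mathcomp Require Import all_boot all_order all_algebra.
From mathcomp Require Import all_classical all_reals topology normedtype derive.
Set Implicit Arguments. Unset Strict Implicit. Unset Printing Implicit Defensive.
Import Order.TTheory GRing.Theory Num.Theory.
Import numFieldNormedType.Exports.
Local Open Scope classical_set_scope.
Local Open Scope ring_scope.

Section Defs.
Variable R : realType.

(* Euclidean norm on R^n (the library norm on 'rV is the max norm). *)
Definition enorm (n : nat) (v : 'rV[R]_n) : R :=
  Num.sqrt (\sum_(k < n) (v 0 k) ^+ 2).

(* class K_infinity, for functions R_{>=0} -> R_{>=0} (represented on R) *)
Definition Kinf (a : R -> R) : Prop :=
  [/\ a 0 = 0,
      {within [set r : R | 0 <= r], continuous a},
      (forall r s : R, 0 <= r -> r < s -> a r < a s) &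
      (forall M : R, exists r : R, 0 <= r /\ M < a r)].

Definition C1 (U W : normedModType R) (f : U -> W) : Prop :=
  (forall x, differentiable f x) /\ (forall v, continuous (fun x => 'd f x v)).

Definition loc_lip_x (nx nu nv : nat)
    (f : 'rV[R]_nx -> 'rV[R]_nu -> 'rV[R]_nv -> 'rV[R]_nx) : Prop :=
  forall r : R, 0 < r -> exists L : R, forall x x' u v,
    enorm x <= r -> enorm x' <= r -> enorm u <= r -> enorm v <= r ->
    enorm (f x u v - f x' u v) <= L * enorm (x - x').

(* sensor-node partition of the output coordinates: coordinate k of y
   belongs to node blk k; e_i is the sub-vector of e on the block of node i *)
Definition blknorm (ny N : nat) (blk : 'I_ny -> 'I_N) (e : 'rV[R]_ny) (i : 'I_N) : R :=
  Num.sqrt (\sum_(k < ny | blk k == i) (e 0 k) ^+ 2).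

Definition blkreset (ny N : nat) (blk : 'I_ny -> 'I_N) (e : 'rV[R]_ny) (i : 'I_N)
  : 'rV[R]_ny := \row_k (if blk k == i then 0 else e 0 k).

(* hybrid state q = (x, (z, (e, eta))) *)

Definition Qset (nx nz ny N : nat) : set ('rV[R]_nx * ('rV[R]_nz * ('rV[R]_ny * 'rV[R]_N))) :=
  [set q | forall i : 'I_N, 0 <= (q.2.2.2 : 'rV[R]_N) 0 i].

End Defs.

Notation state R nx nz ny N :=
  ('rV[R]_nx * ('rV[R]_nz * ('rV[R]_ny * 'rV[R]_N)))%type (only parsing).

(* Main.v *)
Require Import Defs.
From HB Require Import structures.
From mathcomp Require Import all_boot all_order all_algebra.
From mathcomp Require Import all_classical all_reals topology normedtype derive.
From mathcomp Require Import lra.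
Import Order.TTheory GRing.Theory Num.Theory.
Import numFieldNormedType.Exports.
Local Open Scope classical_set_scope.
Local Open Scope ring_scope.
Section KH.
Context {R : realType}.

Lemma Kinf_le {a : R -> R} {r s : R} : Kinf a -> 0 <= r -> r <= s -> a r <= a s.
Proof.
case=> _ _ inc _ r0 rs; case: (ltrgtP r s) rs => // [rs _|-> _].
  exact/ltW/inc.
exact: lexx.
Qed.

Lemma Kinf_ge0 {a : R -> R} {r : R} : Kinf a -> 0 <= r -> 0 <= a r.
Proof. move=> Ka r0; have := Kinf_le Ka (lexx 0) r0; case: Ka => -> //. Qed.

Lemma Kinf_add (a b : R -> R) : Kinf a -> Kinf b -> Kinf (fun r => a r + b r).
Proof.
move=> Ka Kb; case: (Ka) => a0 ca ia ua; case: (Kb) => b0 cb ib ub; split.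
- by rewrite a0 b0 addr0.
- move=> x; exact: (continuousD (ca x) (cb x)).
- by move=> r s r0 rs; apply: ltrD; [exact: ia|exact: ib].
- move=> M; have [r [r0 Mr]] := ua M; exists r; split => //.
  apply: (lt_le_trans Mr); rewrite lerDl.
  exact: (Kinf_ge0 Kb r0).
Qed.

Lemma Kinf_min (a b : R -> R) : Kinf a -> Kinf b ->
  Kinf (fun r => Num.min (a r) (b r)).
Proof.
case=> a0 ca ia ua [b0 cb ib ub]; split.
- by rewrite a0 b0 minxx.
- move=> x; exact: (continuous_min (ca x) (cb x)).
- by move=> r s r0 rs; rewrite lt_min !gt_min (ia _ _ r0 rs) (ib _ _ r0 rs) /= orbT.
- move=> M; have [r [r0 Mr]] := ua M; have [s [s0 Ms]] := ub M.
  exists (Num.max r s); split; first by rewrite le_max r0.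
  rewrite lt_min; apply/andP; split.
  + apply: (lt_le_trans Mr); apply: (@Kinf_le a); [by split|done|by rewrite le_max lexx].
  + apply: (lt_le_trans Ms); apply: (@Kinf_le b); [by split|done|by rewrite le_max lexx orbT].
Qed.

Lemma Kinf_lin (k : R) : 0 < k -> Kinf (fun r => k * r).
Proof.
move=> k0; split.
- by rewrite mulr0.
- apply: continuous_subspaceT => x.
  exact: (@scaler_continuous R R^o k x).
- by move=> r s _ rs; rewrite ltr_pM2l.
- move=> M; exists ((`|M| + 1) / k); split.
    by apply: divr_ge0; [rewrite addr_ge0|exact: ltW].
  rewrite mulrC divfK ?gt_eqF //; apply: (le_lt_trans (ler_norm M)).
  by rewrite ltrDl.
Qed.

Lemma Kinf_scale (a : R -> R) (k : R) : 0 < k -> Kinf a -> Kinf (fun r => a (k * r)).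
Proof.
move=> k0 [a0 ca ia ua]; split.
- by rewrite mulr0.
- apply/subspace_continuousP => x x0.
  have := (iffLR (subspace_continuousP _ _) ca (k * x)).
  move=> /(_ (mulr_ge0 (ltW k0) x0)) H.
  refine (cvg_comp (fun r => k * r) a _ H).
  move=> P /= HP.
  have cm : (fun r : R => k * r) @ nbhs x --> nbhs (k * x).
    exact: (@scaler_continuous R R^o k x).
  move: HP; rewrite /within => HP. have := cm _ HP. rewrite !nbhs_simpl /=.
  apply: filterS => r /= Hr Ar.
  apply: Hr; rewrite /= mulr_ge0 // ltW //.
- by move=> r s r0 rs; apply: ia; [rewrite mulr_ge0 // ltW|rewrite ltr_pM2l].
- move=> M; have [r [r0 Mr]] := ua M; exists (r / k); split.
    by rewrite divr_ge0 // ltW.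
  by rewrite mulrC divfK ?gt_eqF.
Qed.
End KH.
Section NL.
Context {R : realType}.

Lemma sumsq_ge0 {n} (v : 'rV[R]_n) : 0 <= \sum_(k < n) (v 0 k) ^+ 2.
Proof. by apply: sumr_ge0 => k _; exact: sqr_ge0. Qed.

Lemma enorm_ge0 {n} (v : 'rV[R]_n) : 0 <= enorm v.
Proof. exact: sqrtr_ge0. Qed.

Lemma enorm_row_mx {n1 n2} (a : 'rV[R]_n1) (b : 'rV[R]_n2) :
  enorm (row_mx a b) = Num.sqrt (\sum_(k < n1) (a 0 k) ^+ 2 + \sum_(k < n2) (b 0 k) ^+ 2).
Proof.
rewrite /enorm big_split_ord; congr (Num.sqrt (_ + _)); apply: eq_bigr => k _.
  by rewrite row_mxEl.
by rewrite row_mxEr.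
Qed.

Lemma enorm_row_le {n1 n2} (a : 'rV[R]_n1) (b : 'rV[R]_n2) :
  enorm (row_mx a b) <= enorm a + enorm b.
Proof.
rewrite enorm_row_mx /enorm.
have ha := sumsq_ge0 a; have hb := sumsq_ge0 b.
set sa := \sum_(k < n1) _ in ha *; set sb := \sum_(k < n2) _ in hb *.
rewrite -(ger0_norm (addr_ge0 (sqrtr_ge0 sa) (sqrtr_ge0 sb))) -sqrtr_sqr.
apply: ler_wsqrtr; rewrite sqrrD !sqr_sqrtr // mulr2n.
have := mulr_ge0 (sqrtr_ge0 sa) (sqrtr_ge0 sb); lra.
Qed.

Lemma enorm_row_l {n1 n2} (a : 'rV[R]_n1) (b : 'rV[R]_n2) :
  enorm a <= enorm (row_mx a b).
Proof. by rewrite enorm_row_mx /enorm; apply: ler_wsqrtr; rewrite lerDl sumsq_ge0. Qed.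

Lemma enorm_row_r {n1 n2} (a : 'rV[R]_n1) (b : 'rV[R]_n2) :
  enorm b <= enorm (row_mx a b).
Proof. by rewrite enorm_row_mx /enorm; apply: ler_wsqrtr; rewrite lerDr sumsq_ge0. Qed.

Lemma coord_le_enorm {n} (v : 'rV[R]_n) i : v 0 i <= enorm v.
Proof.
apply: (le_trans (ler_norm _)); rewrite -sqrtr_sqr /enorm; apply: ler_wsqrtr.
rewrite (bigD1 i) //= lerDl; apply: sumr_ge0 => k _; exact: sqr_ge0.
Qed.

Lemma coord_le_sum {n} (v : 'rV[R]_n) i : (forall j, 0 <= v 0 j) -> v 0 i <= \sum_(j < n) v 0 j.
Proof. by move=> h; rewrite (bigD1 i) //= lerDl; apply: sumr_ge0 => k _. Qed.

Lemma enorm_le_sum {n} (v : 'rV[R]_n) : (forall i, 0 <= v 0 i) ->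
  enorm v <= \sum_(i < n) v 0 i.
Proof.
move=> h; have S0 : 0 <= \sum_(i < n) v 0 i by apply: sumr_ge0.
rewrite -(ger0_norm S0) -sqrtr_sqr /enorm; apply: ler_wsqrtr.
rewrite [X in _ <= X]expr2 mulr_suml; apply: ler_sum => i _.
by rewrite expr2 ler_wpM2l // coord_le_sum.
Qed.
End NL.
Section T.
Variable R : realType.
Variables nx nz ny N : nat.
Let S := ('rV[R]_nx * ('rV[R]_nz * ('rV[R]_ny * 'rV[R]_N)))%type.
Lemma snd_cont {U W : topologicalType} : continuous (@snd U W).
Proof. move=> x; exact: cvg_snd. Qed.
Lemma fst_cont {U W : topologicalType} : continuous (@fst U W).
Proof. move=> x; exact: cvg_fst. Qed.
Lemma P_cont : continuous (fun q : S => (q.1, q.2.1)).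
Proof.
move=> x; exact: (cvg_pair (fst_cont x) (continuous_comp (snd_cont x) (fst_cont _))).
Qed.
Lemma L_cont (d : 'I_N -> R) : continuous (fun q : S => \sum_(i < N) d i * q.2.2.2 0 i).
Proof.
have -> : (fun q : S => \sum_(i < N) d i * q.2.2.2 0 i) =
   \sum_(i < N) (fun q : S => d i * q.2.2.2 0 i).
  by rewrite fct_sumE.
elim/big_ind: _.
- move=> x; exact: cvg_cst.
- by move=> f g cf cg x; exact: (continuousD (cf x) (cg x)).
move=> i _ x.
have c1 : continuous (fun q : S => q.2.2.2 0 i).
  move=> y.
  exact: (continuous_comp (continuous_comp (continuous_comp (snd_cont y) (snd_cont _)) (snd_cont _)) (@coord_continuous R 1 N 0 i _)).
exact: (continuous_comp (c1 x) (@scaler_continuous R R^o (d i) _)).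
Qed.

Lemma dU (V : 'rV[R]_nx * 'rV[R]_nz -> R) (d : 'I_N -> R) (q w : S) :
  (forall p, differentiable V p) ->
  'd (fun q : S => V (q.1, q.2.1) + \sum_(i < N) d i * q.2.2.2 0 i) q w =
  'd V (q.1, q.2.1) (w.1, w.2.1) + \sum_(i < N) d i * w.2.2.2 0 i.
Proof.
move=> dV.
have P_lin : linear (fun q : S => (q.1, q.2.1)) by [].
pose PL : {linear S -> ('rV[R]_nx * 'rV[R]_nz)%type} := HB.pack (fun q : S => (q.1, q.2.1)) (GRing.isLinear.Build _ _ _ _ _ P_lin).
have L_lin : linear (fun q : S => \sum_(i < N) d i * q.2.2.2 0 i).
  move=> a u v /=; rewrite scaler_sumr -big_split; apply: eq_bigr => i _ /=.
  by rewrite !mxE mulrDr /GRing.scale /= mulrCA.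
pose LL : {linear S -> R^o} := HB.pack (fun q : S => \sum_(i < N) d i * q.2.2.2 0 i) (GRing.isLinear.Build _ _ _ _ _ L_lin).
have -> : (fun q : S => V (q.1, q.2.1) + \sum_(i < N) d i * q.2.2.2 0 i) = (V \o PL) + (LL : S -> R^o).
  by apply/funext.
have cP : continuous PL by exact: P_cont.
have cL : continuous LL by exact: L_cont.
rewrite diffD; last 2 first.
- apply: differentiable_comp; [exact: (linear_differentiable _ cP)|exact: dV].
- exact: (linear_differentiable _ cL).
rewrite diff_comp; [|exact: (linear_differentiable _ cP)|exact: dV].
rewrite (diff_lin _ cP) (diff_lin _ cL).
by [].
Qed.
End T.
Theorem theorem1 (R : realType) (nx nuu nv ny nz N : nat)
  (blk : 'I_ny -> 'I_N)
  (Uset : set 'rV[R]_nuu) (Vset : set 'rV[R]_nv)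
  (fp : 'rV[R]_nx -> 'rV[R]_nuu -> 'rV[R]_nv -> 'rV[R]_nx)
  (h : 'rV[R]_nx -> 'rV[R]_ny)
  (fo : 'rV[R]_nz -> 'rV[R]_nuu -> 'rV[R]_ny -> 'rV[R]_ny -> 'rV[R]_nz)
  (psi : 'rV[R]_nz -> 'rV[R]_nx) (psiR : 'rV[R]_nx -> 'rV[R]_nz)
  (V : 'rV[R]_nx * 'rV[R]_nz -> R)
  (alo ahi alpha theta : R -> R) (gamma : 'I_N -> R -> R)
  (nu : R) (sigS cS d epsS : 'I_N -> R) :
  (0 < nx)%N -> (0 < ny)%N -> (0 < N)%N -> (N <= ny)%N ->
  (forall i : 'I_N, exists k : 'I_ny, blk k = i) ->
  continuous (fun p : 'rV[R]_nx * ('rV[R]_nuu * 'rV[R]_nv) => fp p.1 p.2.1 p.2.2) ->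
  loc_lip_x fp ->
  C1 h ->
  continuous (fun p : 'rV[R]_nz * ('rV[R]_nuu * ('rV[R]_ny * 'rV[R]_ny)) =>
                fo p.1 p.2.1 p.2.2.1 p.2.2.2) ->
  (forall x, psi (psiR x) = x) ->
  (* Assumption 2 *)
  Kinf alo -> Kinf ahi -> Kinf alpha -> (forall i, Kinf (gamma i)) -> Kinf theta ->
  C1 V -> (forall p, 0 <= V p) ->
  (forall x z, alo (enorm (x - psi z)) <= V (x, z) /\
               V (x, z) <= ahi (enorm (psiR x - z))) ->
  (forall x z u v e yh, Uset u -> Vset v ->
     'd V (x, z) (fp x u v, fo z u (h x + e) yh)
       <= - alpha (V (x, z)) + \sum_(i < N) gamma i (blknorm blk e i)
          + theta (enorm v)) ->
  (* design choices *)
  0 < nu ->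
  (forall i, 0 < sigS i) -> (forall i, 0 <= cS i) -> (forall i, sigS i * cS i < 1) ->
  (forall i, sigS i / (1 - sigS i * cS i) < d i) ->
  (forall i, 0 < epsS i) ->
  \sum_(i < N) (1 + d i * cS i) * epsS i <= nu ->
  let U := fun q : state R nx nz ny N =>
             V (q.1, q.2.1) + \sum_(i < N) d i * q.2.2.2 0 i in
  let delta := fun i : 'I_N => d i - sigS i * (1 + d i * cS i) in
  (forall i, 0 < delta i) /\
  exists aUlo aUhi : R -> R, Kinf aUlo /\ Kinf aUhi /\
  forall (al : 'I_N -> R -> R) (sig c eps b : 'I_N -> R),
    (forall i, Kinf (al i)) ->
    (forall i, 0 <= sig i <= sigS i) -> (forall i, 0 <= c i <= cS i) ->
    (forall i, 0 < eps i <= epsS i) -> (forall i, 0 <= b i <= 1) ->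
    let Cset := [set q : state R nx nz ny N | Qset q /\ forall i,
                   gamma i (blknorm blk q.2.2.1 i) <= sig i * al i (q.2.2.2 0 i) + eps i] in
    let Dset_i := fun i : 'I_N => [set q : state R nx nz ny N | Qset q /\
                   sig i * al i (q.2.2.2 0 i) + eps i <= gamma i (blknorm blk q.2.2.1 i)] in
    let Dset := [set q | exists i, Dset_i i q] in
    let F := fun (q : state R nx nz ny N) (u : 'rV[R]_nuu) (v : 'rV[R]_nv) =>
      (fp q.1 u v,
       (fo q.2.1 u (h q.1 + q.2.2.1) (h (psi q.2.1)),
        (- ('d h (q.1 : 'rV[R]_nx) : 'rV[R]_nx -> 'rV[R]_ny) (fp q.1 u v),
         \row_i (- al i (q.2.2.2 0 i) + c i * gamma i (blknorm blk q.2.2.1 i))))) in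
    let G := fun q : state R nx nz ny N =>
      [set g | exists i, Dset_i i q /\
         g = (q.1, (q.2.1, (blkreset blk q.2.2.1 i,
               \row_j (if j == i then b i * q.2.2.2 0 j else q.2.2.2 0 j))))] in
    [/\ (forall q, Qset q ->
           aUlo (enorm (row_mx (q.1 - psi q.2.1) q.2.2.2)) <= U q /\
           U q <= aUhi (enorm (row_mx (psiR q.1 - q.2.1) q.2.2.2))),
        (forall q u v, Cset q -> Uset u -> Vset v ->
           'd U q (F q u v) <= - alpha (V (q.1, q.2.1))
              - \sum_(i < N) delta i * al i (q.2.2.2 0 i) + nu + theta (enorm v)) &
        (forall q, Dset q -> forall g, G q g -> U g <= U q)].
Proof.
move=> nx0 ny0 N0 NleNy blk_surj fpc lip hC1 foc psiK Kalo Kahi Kalpha Kgamma Ktheta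
  VC1 V0 Vsand Vdiss nu0 sig0 c0 sc1 dgt eps0 sumeps U delta.
pose i0 := (Ordinal N0 : 'I_N).
have dpos : forall i, 0 < d i.
  move=> i; apply: le_lt_trans (dgt i); apply: divr_ge0; first exact: ltW.
  by rewrite subr_ge0 ltW.
have deltapos : forall i, 0 < delta i.
  move=> i; have := dgt i; rewrite ltr_pdivrMr ?subr_gt0 // /delta => hh.
  have := sc1 i; have := dpos i; lra.
split => //.
pose S := \sum_(i < N) (d i)^-1.
have S0 : 0 < S.
  rewrite /S (bigD1 i0) //= ltr_pwDl ?invr_gt0 //.
  by apply: sumr_ge0 => i _; rewrite invr_ge0 ltW.
pose m := 1 / S.
have m0 : 0 < m by rewrite /m divr_gt0.
have mle : forall i, m <= d i.
  move=> i; rewrite /m ler_pdivrMr //.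
  apply: (@le_trans _ _ (d i * (d i)^-1)); first by rewrite mulfV // gt_eqF.
  apply: ler_wpM2l; first exact: ltW.
  by rewrite /S (bigD1 i) //= lerDl; apply: sumr_ge0 => j _; rewrite invr_ge0 ltW.
pose D := \sum_(i < N) d i + 1.
have Dge : 0 <= \sum_(i < N) d i by apply: sumr_ge0 => i _; exact: ltW.
have D0 : 0 < D by rewrite /D; lra.
exists (fun r => Num.min (alo (2^-1 * r)) ((m / 2) * r)), (fun r => ahi r + D * r).
split.
  apply: Kinf_min; first by apply: Kinf_scale => //; rewrite invr_gt0.
  by apply: Kinf_lin; rewrite divr_gt0.
split; first by apply: Kinf_add => //; apply: Kinf_lin.
move=> al sig c eps b Kal hsig hc heps hb Cset Dset_i Dset F G.
have etaS : forall (q : state R nx nz ny N), Qset q -> 0 <= \sum_(i < N) d i * q.2.2.2 0 i.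
  by move=> q Qq; apply: sumr_ge0 => i _; rewrite mulr_ge0 // ltW.
split.
- move=> q Qq; split.
  + pose r := enorm (row_mx (q.1 - psi q.2.1) q.2.2.2).
    pose A := enorm (q.1 - psi q.2.1). pose E := enorm q.2.2.2.
    have hr : r <= A + E by exact: enorm_row_le.
    have A0 : 0 <= A by exact: enorm_ge0.
    have E0 : 0 <= E by exact: enorm_ge0.
    have r0 : 0 <= r by exact: enorm_ge0.
    have sde : m * E <= \sum_(i < N) d i * q.2.2.2 0 i.
      apply: (@le_trans _ _ (m * \sum_(i < N) q.2.2.2 0 i)).
        by apply: ler_wpM2l; [exact: ltW|exact: enorm_le_sum].
      rewrite mulr_sumr; apply: ler_sum => i _; apply: ler_wpM2r; [exact: Qq|exact: mle].
    have [Vlo _] := Vsand q.1 q.2.1.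
    have eS := etaS q Qq. have V0q := V0 (q.1, q.2.1).
    change (Num.min (alo (2^-1 * r)) (m / 2 * r) <= U q); rewrite /U /=.
    case: (lerP (2^-1 * r) A) => hA.
    * rewrite ge_min; apply/orP; left.
      have h2 : 0 <= 2^-1 * r by rewrite mulr_ge0 // invr_ge0.
      have := Kinf_le Kalo h2 hA; rewrite -/A in Vlo; lra.
    * rewrite ge_min; apply/orP; right.
      have hE : 2^-1 * r <= E by lra.
      rewrite -mulrA; apply: (@le_trans _ _ (m * E)); last lra.
      by apply: ler_wpM2l; [exact: ltW|].
  + pose r := enorm (row_mx (psiR q.1 - q.2.1) q.2.2.2).
    pose A := enorm (psiR q.1 - q.2.1). pose E := enorm q.2.2.2.
    have hA : A <= r by exact: enorm_row_l.
    have hE : E <= r by exact: enorm_row_r.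
    have A0 : 0 <= A by exact: enorm_ge0.
    have E0 : 0 <= E by exact: enorm_ge0.
    have [_ Vhi] := Vsand q.1 q.2.1.
    have h1 : ahi A <= ahi r := Kinf_le Kahi A0 hA.
    have h2 : \sum_(i < N) d i * q.2.2.2 0 i <= (\sum_(i < N) d i) * E.
      rewrite mulr_suml; apply: ler_sum => i _; apply: ler_wpM2l.
        exact: ltW.
      exact: coord_le_enorm.
    have h3 : (\sum_(i < N) d i) * E <= (\sum_(i < N) d i) * r.
      by apply: ler_wpM2l.
    change (U q <= ahi r + D * r); rewrite /U /D /= mulrDl mul1r.
    rewrite -/A in Vhi; have := enorm_ge0 (row_mx (psiR q.1 - q.2.1) q.2.2.2); rewrite -/r.
    lra.
- move=> q u v [Qq Cq] Uu Vv.
  rewrite /U dU; last exact: VC1.1.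
  rewrite /F /=.
  have Vd := Vdiss q.1 q.2.1 u v q.2.2.1 (h (psi q.2.1)) Uu Vv.
  have -> : \sum_(i < N) d i * (\row_i (- al i (q.2.2.2 0 i) + c i * gamma i (blknorm blk q.2.2.1 i))) 0 i
     = \sum_(i < N) d i * (- al i (q.2.2.2 0 i) + c i * gamma i (blknorm blk q.2.2.1 i)).
    by apply: eq_bigr => i _; rewrite mxE.
  have key : \sum_(i < N) gamma i (blknorm blk q.2.2.1 i)
     + \sum_(i < N) d i * (- al i (q.2.2.2 0 i) + c i * gamma i (blknorm blk q.2.2.1 i))
     + \sum_(i < N) delta i * al i (q.2.2.2 0 i) <= nu.
    rewrite -!big_split /=; apply: le_trans sumeps; apply: ler_sum => i _.
    set g := gamma i _; set a := al i _.
    have g0 : 0 <= g by apply: (Kinf_ge0 (Kgamma i)); exact: sqrtr_ge0.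
    have a0 : 0 <= a by apply: (Kinf_ge0 (Kal i)); exact: Qq.
    have hg : g <= sig i * a + eps i by exact: Cq.
    case/andP: (hsig i) => s0 s1; case/andP: (hc i) => cc0 cc1.
    case/andP: (heps i) => e0 e1; have di := dpos i.
    have dc0 : 0 <= 1 + d i * c i by rewrite addr_ge0 // mulr_ge0 // ltW.
    have t1 : g * (1 + d i * c i) <= (sig i * a + eps i) * (1 + d i * c i).
      by apply: ler_wpM2r.
    have t2 : (sig i * a + eps i) * (1 + d i * c i) <= (sigS i * a + epsS i) * (1 + d i * c i).
      by apply: ler_wpM2r => //; apply: lerD => //; apply: ler_wpM2r.
    have t3 : (sigS i * a + epsS i) * (1 + d i * c i) <= (sigS i * a + epsS i) * (1 + d i * cS i).
      apply: ler_wpM2l; first by rewrite addr_ge0 // ?mulr_ge0 // ltW.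
      by rewrite lerD2l; apply: ler_wpM2l => //; exact: ltW.
    rewrite /delta; lra.
  lra.
- move=> q [i [Qq _]] g [j [_ ->]].
  rewrite /U /= lerD2l; apply: ler_sum => k _; rewrite mxE.
  case: eqP => [->|_] //.
  apply: ler_wpM2l; first exact: ltW.
  case/andP: (hb j) => _ hb1; exact: ler_piMl.
Qed.
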